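(* For the iterates of the Jacobi scheme described in the context, for all $k\ge0$, $$\lambda^k=-\theta z^k-\tau_z\Delta z^k.$$
   Context: Data: $A_t\in\mathbb{R}^{m\times n_t}$, $X_t\subseteq\mathbb{R}^{n_t}$, $f_t:\mathbb{R}^{n_t}\to\mathbb{R}$ ($t\in[T]$), $b\in\mathbb{R}^m$, $Ax=\sum_tA_tx_t$, $A_{\neq t}x_{\neq t}=\sum_{s\neq t}A_sx_s$, $\|w\|_M=\sqrt{w^\top Mw}$. Jacobi scheme: given $x^0\in X_1\times\cdots\times X_T$, $z^0,\lambda^0\in\mathbb{R}^m$, $\rho,\theta,\tau_x,\tau_z>0$, for $k\ge1$: (i) each $x_t^k$ is a local minimizer of $\min_{x_t\in X_t}f_t(x_t)+(\lambda^{k-1})^\top A_tx_t+\frac{\rho}{2}\|A_tx_t+A_{\neq t}x^{k-1}_{\neq t}+z^{k-1}-b\|^2+\frac{\tau_x}{2}\|x_t-x_t^{k-1}\|^2_{A_t^\top A_t}$; (ii) $z^k=(\tau_zz^{k-1}-\rho(Ax^k-b)-\lambda^{k-1})/(\tau_z+\rho+\theta)$; (iii) $\lambda^k=\lambda^{k-1}+\rho(Ax^k+z^k-b)$. For $k\ge1$, $\Delta z^k=z^k-z^{k-1}$, and $\Delta z^0:=-\tau_z^{-1}(\lambda^0+\theta z^0)$. *)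

(* Defs.v *)
From mathcomp Require Import all_boot all_order all_algebra.
From mathcomp Require Import reals.
Set Implicit Arguments. Unset Strict Implicit. Unset Printing Implicit Defensive.
Import Order.TTheory GRing.Theory Num.Theory.
Local Open Scope ring_scope.

Definition sqnorm (R : realType) (p : nat) (w : 'cV[R]_p) : R := (w^T *m w) 0 0.

Definition sqMnorm (R : realType) (p : nat) (M : 'M[R]_p) (w : 'cV[R]_p) : R :=
  (w^T *m M *m w) 0 0.

Definition local_minimizer (R : realType) (p : nat) (S : 'cV[R]_p -> Prop)
  (g : 'cV[R]_p -> R) (x : 'cV[R]_p) : Prop :=
  S x /\ exists eps : R, 0 < eps /\
    forall y, S y -> sqnorm (y - x) < eps ^+ 2 -> g x <= g y.

Definition Aop (R : realType) (m T : nat) (n : 'I_T -> nat)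
  (A : forall t : 'I_T, 'M[R]_(m, n t)) (x : forall t : 'I_T, 'cV[R]_(n t)) : 'cV[R]_m :=
  \sum_(t < T) A t *m x t.

Definition Aop_neq (R : realType) (m T : nat) (n : 'I_T -> nat)
  (A : forall t : 'I_T, 'M[R]_(m, n t)) (x : forall t : 'I_T, 'cV[R]_(n t))
  (t : 'I_T) : 'cV[R]_m :=
  \sum_(s < T | s != t) A s *m x s.

Definition subproblem (R : realType) (m T : nat) (n : 'I_T -> nat)
  (A : forall t : 'I_T, 'M[R]_(m, n t)) (f : forall t : 'I_T, 'cV[R]_(n t) -> R)
  (b : 'cV[R]_m) (rho tau_x : R) (xprev : forall t : 'I_T, 'cV[R]_(n t))
  (zprev lamprev : 'cV[R]_m) (t : 'I_T) (xt : 'cV[R]_(n t)) : R :=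
  f t xt + (lamprev^T *m (A t *m xt)) 0 0
  + rho / 2 * sqnorm (A t *m xt + Aop_neq A xprev t + zprev - b)
  + tau_x / 2 * sqMnorm ((A t)^T *m A t) (xt - xprev t).

Definition deltaz (R : realType) (m : nat) (z lam : nat -> 'cV[R]_m) (theta tau_z : R)
  (k : nat) : 'cV[R]_m :=
  if k is k'.+1 then z k'.+1 - z k' else - (tau_z^-1 *: (lam 0%N + theta *: z 0%N)).

Arguments subproblem {R m T n} A f b rho tau_x xprev zprev lamprev t xt.
Arguments Aop_neq {R m T n} A x t.

(* Main.v *)
Require Import Defs.
From mathcomp Require Import all_boot all_order all_algebra.
From mathcomp Require Import reals.
Import Order.TTheory GRing.Theory Num.Theory.
Local Open Scope ring_scope.

Lemma grp (V : zmodType) (a W d e g : V) :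
  a - W - (d + e + g) + (W + e) = - g - (d - a).
Proof.
rewrite !opprD !addrA opprK [_ - g + W]addrAC [_ - e + W]addrAC [_ - d + W]addrAC subrK.
rewrite addrAC subrK addrC addrA [- g + a]addrC addrAC.
by rewrite [RHS]addrC addrA [RHS]addrAC.
Qed.

Theorem lemma1 (R : realType) (m T : nat) (n : 'I_T -> nat)
  (A : forall t : 'I_T, 'M[R]_(m, n t)) (X : forall t : 'I_T, 'cV[R]_(n t) -> Prop)
  (f : forall t : 'I_T, 'cV[R]_(n t) -> R) (b : 'cV[R]_m)
  (rho theta tau_x tau_z : R)
  (x : nat -> forall t : 'I_T, 'cV[R]_(n t)) (z lam : nat -> 'cV[R]_m) :
  0 < rho -> 0 < theta -> 0 < tau_x -> 0 < tau_z ->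
  (forall t : 'I_T, X t (x 0%N t)) ->
  (forall k : nat, (1 <= k)%N -> forall t : 'I_T,
     local_minimizer (X t)
       (subproblem A f b rho tau_x (x k.-1) (z k.-1) (lam k.-1) t) (x k t)) ->
  (forall k : nat, (1 <= k)%N ->
     z k = (tau_z + rho + theta)^-1 *:
             (tau_z *: z k.-1 - rho *: (Aop A (x k) - b) - lam k.-1)) ->
  (forall k : nat, (1 <= k)%N ->
     lam k = lam k.-1 + rho *: (Aop A (x k) + z k - b)) ->
  forall k : nat, lam k = - (theta *: z k) - tau_z *: deltaz z lam theta tau_z k.
Proof.
move=> rho0 th0 tx0 tz0 _ _ Hz Hl [|k].
  rewrite /deltaz scalerN opprK scalerA mulfV ?gt_eqF // scale1r.
  by rewrite addrC addrK.
have H1 : (0 < k.+1)%N by [].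
have Hs : (tau_z + rho + theta) *: z k.+1 =
  tau_z *: z k - rho *: (Aop A (x k.+1) - b) - lam k by
  rewrite (Hz _ H1) scalerA mulfV ?scale1r // gt_eqF // !addr_gt0.
rewrite /deltaz (Hl _ H1) /=.
have -> : Aop A (x k.+1) + z k.+1 - b = (Aop A (x k.+1) - b) + z k.+1
  by rewrite addrAC.
move: Hs; rewrite !scalerDl => Hs.
have E : lam k = tau_z *: z k - rho *: (Aop A (x k.+1) - b)
   - (tau_z *: z k.+1 + rho *: z k.+1 + theta *: z k.+1).
  by rewrite Hs opprB addrC subrK.
rewrite E [rho *: (_ + z _)]scalerDr [tau_z *: (_ - _)]scalerBr.
exact: grp.
Qed.
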